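(* Let $n\ge 3$ and let $h(q)=q^n+q^{n-2}a_{n-2}+\dots+qa_1+a_0$ with $a_0,\dots,a_{n-2}\in\mathbb{H}$ and $a_{n-2}\neq 0$. Put $\lambda=\big(\max_{0\le j\le n-2}|a_j|\big)^{1/n}$. Then every zero $q\in\mathbb{H}$ of $h$ satisfies $$|q|\le \lambda+\max\{\lambda^2,\lambda^{n-1}\}.$$
   Context: $\mathbb{H}$ denotes the real quaternions with the Euclidean norm $|q|=\sqrt{q\bar q}$. The polynomial $h$ has coefficients written to the right of the powers and is evaluated at $q\in\mathbb{H}$ by direct substitution; a zero of $h$ is a $q\in\mathbb{H}$ with $h(q)=0$. *)

(* Defs.v *)
From mathcomp Require Import all_boot all_order all_algebra.
From mathcomp Require Import all_classical all_reals all_analysis.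
Set Implicit Arguments. Unset Strict Implicit. Unset Printing Implicit Defensive.
Import Order.TTheory GRing.Theory Num.Theory.
Local Open Scope ring_scope.

(* Real quaternions x0 + x1 i + x2 j + x3 k over R. *)
Record quat (R : realType) := Quat { q0 : R; q1 : R; q2 : R; q3 : R }.

Section Quat.
Variable R : realType.
Definition qzero : quat R := Quat 0 0 0 0.
Definition qone : quat R := Quat 1 0 0 0.
Definition qadd (p q : quat R) : quat R :=
  Quat (q0 p + q0 q) (q1 p + q1 q) (q2 p + q2 q) (q3 p + q3 q).
(* Hamilton product: i^2 = j^2 = k^2 = ijk = -1. *)
Definition qmul (p q : quat R) : quat R :=
  Quat (q0 p * q0 q - q1 p * q1 q - q2 p * q2 q - q3 p * q3 q)
       (q0 p * q1 q + q1 p * q0 q + q2 p * q3 q - q3 p * q2 q)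
       (q0 p * q2 q - q1 p * q3 q + q2 p * q0 q + q3 p * q1 q)
       (q0 p * q3 q + q1 p * q2 q - q2 p * q1 q + q3 p * q0 q).
Definition qpow (q : quat R) (n : nat) : quat R := iter n (qmul q) qone.
Definition qnorm (q : quat R) : R :=
  Num.sqrt (q0 q ^+ 2 + q1 q ^+ 2 + q2 q ^+ 2 + q3 q ^+ 2).

(* h(q) = q^n + sum_{j=0}^{n-2} q^j a_j  (coefficients on the right) *)
Definition heval (n : nat) (a : nat -> quat R) (q : quat R) : quat R :=
  qadd (qpow q n) (foldr qadd qzero [seq qmul (qpow q j) (a j) | j <- iota 0 n.-1]).
End Quat.

(* Main.v *)
Require Import Defs.
From mathcomp Require Import all_boot all_order all_algebra.
From mathcomp Require Import all_classical all_reals all_analysis.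
From mathcomp Require Import ring lra.
Import Order.TTheory GRing.Theory Num.Theory.
Local Open Scope ring_scope.

Section Aux.
Context {R : realType}.
Implicit Types p q : quat R.

Definition qN (p : quat R) : R := q0 p ^+ 2 + q1 p ^+ 2 + q2 p ^+ 2 + q3 p ^+ 2.

Lemma qN_ge0 p : 0 <= qN p.
Proof. rewrite /qN; have := sqr_ge0 (q0 p); have := sqr_ge0 (q1 p);
  have := sqr_ge0 (q2 p); have := sqr_ge0 (q3 p); lra. Qed.

Lemma qnorm_ge0 p : 0 <= qnorm p.
Proof. exact: sqrtr_ge0. Qed.

Lemma qnorm0 : qnorm (qzero R) = 0.
Proof. by rewrite /qnorm /= expr0n /= !addr0 sqrtr0. Qed.

Lemma qnorm1 : qnorm (qone R) = 1.
Proof. by rewrite /qnorm /= expr0n /= !addr0 expr1n sqrtr1. Qed.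

Lemma qnorm_mul p q : qnorm (qmul p q) = qnorm p * qnorm q.
Proof.
rewrite /qnorm -sqrtrM; last by apply: (qN_ge0 p).
congr Num.sqrt; case: p => a b c d; case: q => e f g h /=; ring.
Qed.

Lemma qnorm_pow q n : qnorm (qpow q n) = qnorm q ^+ n.
Proof.
elim: n => [|n IH]; first by rewrite expr0 /qpow /= qnorm1.
by rewrite exprS -IH /qpow /= qnorm_mul.
Qed.

Lemma qnorm_add p q : qnorm (qadd p q) <= qnorm p + qnorm q.
Proof.
have hp := qN_ge0 p; have hq := qN_ge0 q.
have h0 : 0 <= qnorm p + qnorm q by rewrite addr_ge0 // qnorm_ge0.
set dot := q0 p * q0 q + q1 p * q1 q + q2 p * q2 q + q3 p * q3 q.
have hd : dot <= qnorm p * qnorm q.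
  rewrite /qnorm -/(qN p) -/(qN q) -sqrtrM //.
  apply: (le_trans (ler_norm dot)); rewrite -sqrtr_sqr ler_sqrt; last first.
    by rewrite mulr_ge0.
  rewrite -subr_ge0.
  have -> : qN p * qN q - dot ^+ 2 =
    (q0 p * q1 q - q1 p * q0 q) ^+ 2 + (q0 p * q2 q - q2 p * q0 q) ^+ 2 +
    (q0 p * q3 q - q3 p * q0 q) ^+ 2 + (q1 p * q2 q - q2 p * q1 q) ^+ 2 +
    (q1 p * q3 q - q3 p * q1 q) ^+ 2 + (q2 p * q3 q - q3 p * q2 q) ^+ 2.
    by rewrite /qN /dot; ring.
  by rewrite !addr_ge0 ?sqr_ge0.
have E : (qnorm p + qnorm q) ^+ 2 = qN p + qN q + 2 * (qnorm p * qnorm q).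
  by rewrite sqrrD /qnorm -/(qN p) -/(qN q) !sqr_sqrtr //; ring.
rewrite -(ger0_norm h0) -sqrtr_sqr {1}/qnorm ler_sqrt ?sqr_ge0 // E.
have -> : q0 (qadd p q) ^+ 2 + q1 (qadd p q) ^+ 2 + q2 (qadd p q) ^+ 2 +
   q3 (qadd p q) ^+ 2 = qN p + qN q + 2 * dot.
  by rewrite /qN /dot /=; ring.
lra.
Qed.

Lemma qnorm_addeq0 p q : qadd p q = qzero R -> qnorm p = qnorm q.
Proof.
case: p => a b c d; case: q => e f g h; rewrite /qadd /qzero /= => [[h0 h1 h2 h3]].
rewrite /qnorm /=.
have -> : a = - e by lra. have -> : b = - f by lra.
have -> : c = - g by lra. have -> : d = - h by lra.
by rewrite !sqrrN.
Qed.

Lemma foldr_norm (s : seq nat) (f : nat -> quat R) :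
  qnorm (foldr (@qadd R) (qzero R) [seq f j | j <- s]) <= \sum_(j <- s) qnorm (f j).
Proof.
elim: s => [|x s IH] /=; first by rewrite big_nil qnorm0.
rewrite big_cons; apply: le_trans (qnorm_add _ _) _; exact: lerD.
Qed.

Lemma le_bigmax_seq' (I : eqType) (s : seq I) (F : I -> R) x :
  x \in s -> F x <= \big[Num.max/0]_(i <- s) F i.
Proof.
elim: s => // y s IH; rewrite in_cons big_cons => /orP [/eqP -> | /IH h].
  by rewrite le_max lexx.
by rewrite le_max h orbT.
Qed.

Lemma qN_eq0 p : qN p = 0 -> p = qzero R.
Proof.
case: p => x0 x1 x2 x3; rewrite /qN /= => h.
have := sqr_ge0 x0; have := sqr_ge0 x1; have := sqr_ge0 x2; have := sqr_ge0 x3.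
move=> g3 g2 g1 g0.
have h0 : x0 ^+ 2 == 0 by apply/eqP; lra.
have h1 : x1 ^+ 2 == 0 by apply/eqP; lra.
have h2 : x2 ^+ 2 == 0 by apply/eqP; lra.
have h3 : x3 ^+ 2 == 0 by apply/eqP; lra.
move: h0 h1 h2 h3; rewrite !sqrf_eq0 => /eqP -> /eqP -> /eqP -> /eqP ->.
by [].
Qed.

Lemma le_bigmax_ord k (F : nat -> R) j : (j < k)%N -> F j <= \big[Num.max/0]_(i < k) F i.
Proof.
move=> hj; apply/bigmax_geP; right; by exists (Ordinal hj).
Qed.

Lemma key (l t : R) (m : nat) : 0 <= l -> 1 + Num.max l (l ^+ m.+1) < t ->
  \sum_(0 <= j < m.+2) l ^+ j * t ^+ j < t ^+ m.+3.
Proof.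
move=> l0 ht; set d := Num.max l (l ^+ m.+1) in ht.
have hd j : (1 <= j <= m.+1)%N -> l ^+ j <= d.
  move=> /andP [j1 jm]; rewrite le_max; case: (lerP l 1) => hl.
    by rewrite -{2}(expr1 l) ler_wiXn2l.
  by rewrite ler_weXn2l ?orbT // ltW.
have dl : l <= d by rewrite le_max lexx.
have t1 : 1 < t by lra.
have claim k : (k <= m.+1)%N -> \sum_(0 <= j < k.+1) l ^+ j * t ^+ j <= 1 + t ^+ k.+1 - t.
  elim: k => [|k IH] hk.
    by rewrite big_nat1 !expr0 mulr1 expr1; lra.
  rewrite big_nat_recr //=.
  have := IH (ltnW hk).
  have h1 := hd k.+1 hk.
  have u0 : 0 <= t ^+ k.+1 by rewrite exprn_ge0 // ltW // (lt_trans ltr01).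
  have h2 : l ^+ k.+1 * t ^+ k.+1 <= (t - 1) * t ^+ k.+1.
    by rewrite ler_wpM2r //; lra.
  rewrite (exprS t k.+1).
  set u := t ^+ k.+1 in u0 h2 *; set v := l ^+ k.+1 * u in h2 *.
  set S := \sum_(0 <= j < k.+1) _.
  nra.
apply: le_lt_trans (claim m.+1 (leqnn _)) _.
rewrite (exprS t m.+2).
have u1 : 1 <= t ^+ m.+2 by rewrite exprn_ege1 // ltW.
set u := t ^+ m.+2 in u1 *; nra.
Qed.

End Aux.

Theorem corollary3 (R : realType) (n : nat) (a : nat -> quat R) :
  (3 <= n)%N ->
  a (n - 2)%N <> qzero R ->
  let lambda := (\big[Num.max/0]_(j < n.-1) qnorm (a j)) `^ (n%:R)^-1 in
  forall q : quat R, heval n a q = qzero R ->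
  qnorm q <= lambda + Num.max (lambda ^+ 2) (lambda ^+ n.-1).
Proof.
case: n => [|[|[|m]]] // _ ha lambda q hq.
rewrite subn2 /= in ha.
set M := \big[Num.max/0]_(j < m.+2) qnorm (a j).
have hMj j : (j < m.+2)%N -> qnorm (a j) <= M.
  by move=> hj; rewrite /M; exact: (@le_bigmax_ord R m.+2 (fun i => qnorm (a i))).
have hM0 : 0 < M.
  apply: lt_le_trans (hMj m.+1 (ltnSn _)).
  rewrite /qnorm sqrtr_gt0 -/(@qN R (a m.+1)) lt_def qN_ge0 andbT.
  by apply/eqP => /qN_eq0.
have hl : lambda = M `^ (m.+3%:R)^-1 by [].
have hl0 : 0 < lambda by rewrite hl; apply: powR_gt0.
have hln : lambda ^+ m.+3 = M.
  rewrite hl -powR_mulrn ?powR_ge0 // -powRrM mulVf ?pnatr_eq0 // powRr1 //.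
  exact: ltW.
have hsum : qnorm q ^+ m.+3 <= \sum_(0 <= j < m.+2) qnorm q ^+ j * M.
  move: hq; rewrite /heval => /qnorm_addeq0; rewrite qnorm_pow => ->.
  apply: (le_trans (foldr_norm (iota 0 m.+2) (fun j => qmul (qpow q j) (a j)))).
  change (\sum_(0 <= j < m.+2) qnorm (qmul (qpow q j) (a j)) <= \sum_(0 <= j < m.+2) qnorm q ^+ j * M).
  apply: ler_sum_nat => j /andP [_ hj].
  by rewrite qnorm_mul qnorm_pow ler_wpM2l ?exprn_ge0 ?qnorm_ge0 // hMj.
rewrite leNgt; apply/negP => hr.
set r := qnorm q in hsum hr.
set d := Num.max lambda (lambda ^+ m.+1).
have hB : lambda + Num.max (lambda ^+ 2) (lambda ^+ m.+2) = lambda * (1 + d).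
  by rewrite /d mulrDr mulr1 maxr_pMr ?ltW // -expr2 -exprS.
rewrite /= hB in hr.
set t := r / lambda.
have ht : 1 + d < t by rewrite /t ltr_pdivlMr // mulrC.
have hrt : r = lambda * t by rewrite /t mulrCA divff ?mulr1 // gt_eqF.
have hk := @key R lambda t m (ltW hl0) ht.
have E1 : \sum_(0 <= j < m.+2) r ^+ j * M = M * \sum_(0 <= j < m.+2) lambda ^+ j * t ^+ j.
  by rewrite mulr_sumr; apply: eq_bigr => j _; rewrite hrt exprMn mulrC.
have E2 : r ^+ m.+3 = M * t ^+ m.+3 by rewrite hrt exprMn hln.
have : M * \sum_(0 <= j < m.+2) lambda ^+ j * t ^+ j < M * t ^+ m.+3 by rewrite ltr_pM2l.
by rewrite -E1 -E2 => /(le_lt_trans hsum); rewrite ltxx.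
Qed.
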